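(* Let $G\in\mathcal G^3_2$ and let $ab\in E(G)$ with $d(a)=d(b)=3$, such that $G-ab=A\cup B$ where $A,B$ are vertex-disjoint subgraphs with $a\in V(A)$, $b\in V(B)$. Let $\grave A$ be the subgraph of $G$ consisting of $A$, the vertex $b$ and the edge $ab$, and assume $v(\grave A)=6$ and $\lambda(\grave A)=2$. Let $z_1,z_2$ be the two neighbours of $b$ in $B$, and for $i=1,2$ let $x_iT_ib$ be a path with $bz_i\in E(T_i)$, with $e(T_i)\in\{2,3\}$, whose internal vertices have degree $2$ in $G$ and whose end $x_i\ne b$ has degree $3$ in $G$ (possibly $x_1=x_2$). Define $G'$ as follows. (a1.1) If $T_i=x_iz_ib$ for $i=1,2$ and $x_1\ne x_2$: $G'=G-(V(A)\cup\{b,z_1,z_2\})$. (a1.2) If $T_i=x_iz_ib$ for $i=1,2$ and $x_1=x_2$: $G'$ is obtained from $G-(V(A)\cup\{b\})$ by adding the edge $z_1z_2$. (a2.1) If $T_1=x_1y_1z_1b$, $T_2=x_2z_2b$ and $x_1\ne x_2$: $G'$ is obtained from $G-(V(A)\cup\{b,z_1,z_2\})$ by adding the edge $y_1x_2$. (a2.2) If $T_1=x_1y_1z_1b$, $T_2=x_2z_2b$ and $x_1=x_2$: $G'$ is obtained from $G-(V(A)\cup\{b,z_1\})$ by adding the edge $y_1z_2$. (a3) If $T_1=x_1y_1z_1b$ and $T_2=x_2y_2z_2b$: $G'$ is obtained from $G-(V(A)\cup\{b,z_1,z_2\})$ by adding the edge $y_1y_2$. Then $G'\in\mathcal G^3_2$,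 and $\lambda(G')\ge v(G')/4$ implies $\lambda(G)\ge v(G)/4$.
   Context: All graphs are finite and simple. For integers $1\le r\le s$, $\mathcal G^s_r$ denotes the set of graphs in which every vertex has degree at least $r$ and at most $s$. $d(x)$ is the degree of $x$ in $G$, $v(\cdot)$ and $e(\cdot)$ the numbers of vertices and edges. $\lambda(G)$ denotes the maximum number of pairwise vertex-disjoint subgraphs of $G$ each of which is a path with exactly two edges. *)

(* Defs.v *)
From mathcomp Require Import all_boot.
Set Implicit Arguments. Unset Strict Implicit. Unset Printing Implicit Defensive.

(* A graph on a finite ambient type T: a vertex set and an edge relation.
   Only edges between vertices of gV count (see adj). *)
Record sgraph (T : finType) := SGraph { gV : {set T}; gE : rel T }.

Section Graphs.
Variable T : finType.
Implicit Types (G : sgraph T) (x y : T).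

Definition adj G x y : bool := [&& x \in gV G, y \in gV G & gE G x y].

Definition simple G : Prop := symmetric (gE G) /\ irreflexive (gE G).

Definition deg G x : nat := #|[set y | adj G x y]|.

Definition inG32 G : Prop :=
  simple G /\ forall x, x \in gV G -> 2 <= deg G x <= 3.

Definition nv G : nat := #|gV G|.

Definition isP3 G (t : T * T * T) : bool :=
  let: (u, v, w) := t in
  [&& adj G u v, adj G v w, u != v, v != w & u != w].

Definition tverts (t : T * T * T) : {set T} :=
  let: (u, v, w) := t in [set u; v; w].

Definition packing G (S : {set T * T * T}) : bool :=
  [forall t in S, isP3 G t] &&
  [forall t1 in S, forall t2 in S, (t1 != t2) ==> [disjoint tverts t1 & tverts t2]].

Definition lam G : nat := \max_(S : {set T * T * T} | packing G S) #|S|.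

Definition subgraph H G : Prop :=
  gV H \subset gV G /\ forall x y, adj H x y -> adj G x y.

Definition delv G (X : {set T}) : sgraph T := SGraph (gV G :\: X) (gE G).

Definition adde G u v : sgraph T :=
  SGraph (gV G) (fun x y => [|| gE G x y, (x == u) && (y == v) | (x == v) && (y == u)]).

Definition short_path G x z b : bool :=
  [&& uniq [:: x; z; b], adj G x z, adj G z b, deg G z == 2 & deg G x == 3].

Definition long_path G x y z b : bool :=
  [&& uniq [:: x; y; z; b], adj G x y, adj G y z, adj G z b,
      deg G y == 2, deg G z == 2 & deg G x == 3].

End Graphs.

(* Main.v *)
Require Import Defs.
From mathcomp Require Import all_boot.
Set Implicit Arguments. Unset Strict Implicit. Unset Printing Implicit Defensive.

Section Aux.
Variable T : finType.
Implicit Types (G H : sgraph T) (x y : T) (S : {set T * T * T}).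

Lemma adj_sym G x y : simple G -> adj G x y = adj G y x.
Proof. by case=> Hs _; rewrite /adj Hs andbCA. Qed.

Lemma adj_irr G x : simple G -> adj G x x = false.
Proof. by case=> _ Hi; rewrite /adj Hi !andbF. Qed.

Lemma adj_inl G x y : adj G x y -> x \in gV G.
Proof. by case/and3P. Qed.
Lemma adj_inr G x y : adj G x y -> y \in gV G.
Proof. by case/and3P. Qed.

Lemma packingP G S : reflect
  ((forall t, t \in S -> isP3 G t) /\
   (forall t1 t2, t1 \in S -> t2 \in S -> t1 != t2 -> [disjoint tverts t1 & tverts t2]))
  (packing G S).
Proof.
apply: (iffP andP) => [[/forall_inP H1 /forall_inP H2]|[H1 H2]]; split.
- exact: H1.
- by move=> t1 t2 i1 i2 ne; have /forall_inP := H2 _ i1; move/(_ _ i2)/implyP; apply.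
- by apply/forall_inP.
- by apply/forall_inP => t1 i1; apply/forall_inP => t2 i2; apply/implyP; apply: H2.
Qed.


Lemma tverts_ne0 (t : T * T * T) : tverts t != set0.
Proof. by case: t => [[u v] w]; apply/set0Pn; exists u; rewrite /= !inE eqxx. Qed.

Lemma add1 G S t : packing G S -> isP3 G t ->
  (forall t1, t1 \in S -> [disjoint tverts t & tverts t1]) ->
  packing G (t |: S) /\ #|t |: S| = #|S|.+1.
Proof.
move=> /packingP [H1 H2] Ht Hd.
have tS : t \notin S.
  apply/negP => tS; have := Hd _ tS; rewrite -setI_eq0 setIid.
  by rewrite (negbTE (tverts_ne0 t)).
split; last by rewrite cardsU1 tS.
apply/packingP; split.
- by move=> t1 /setU1P [->|]; [|apply: H1].
- move=> t1 t2 /setU1P [->|i1] /setU1P [->|i2] ne.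
  + by rewrite eqxx in ne.
  + exact: Hd.
  + by rewrite disjoint_sym; apply: Hd.
  + exact: H2.
Qed.

Lemma packing_sub G S S0 : packing G S -> S0 \subset S -> packing G S0.
Proof.
move=> /packingP [H1 H2] sub; apply/packingP; split.
- by move=> t i; apply: H1; apply: (subsetP sub).
- by move=> t1 t2 i1 i2; apply: H2; apply: (subsetP sub).
Qed.

Lemma lam_ge G S : packing G S -> #|S| <= lam G.
Proof. by move=> H; rewrite /lam (leq_bigmax_cond S H). Qed.

Lemma packing0 G : packing G set0.
Proof. by apply/packingP; split => t; rewrite inE. Qed.


Lemma disjsU (A B C : {set T}) :
  [disjoint A :|: B & C] = [disjoint A & C] && [disjoint B & C].
Proof. by rewrite -!setI_eq0 setIUl setU_eq0. Qed.

Lemma P3_sub H (t : T * T * T) : isP3 H t -> tverts t \subset gV H.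
Proof.
case: t => [[u v] w] /and5P [/and3P [uG vG _] /and3P [_ wG _] _ _ _].
by apply/subsetP => x; rewrite /= !inE -orbA => /or3P [] /eqP ->.
Qed.

Lemma third H u v w s t : isP3 H (u, v, w) -> s \in tverts (u, v, w) ->
  t \in tverts (u, v, w) -> s != t ->
  exists m, [/\ m \in tverts (u, v, w), m != s, m != t &
     [|| adj H m s, adj H s m, adj H m t | adj H t m]].
Proof.
case/and5P => Huv Hvw nuv nvw nuw.
rewrite /= !inE -!orbA => /or3P [] /eqP -> /or3P [] /eqP -> //; rewrite ?eqxx // => _.
- by exists w; rewrite !inE eqxx orbT; split => //; rewrite ?Hvw ?orbT // eq_sym.
- by exists v; rewrite !inE eqxx orbT; split => //; rewrite ?Huv ?orbT // eq_sym.
- by exists w; rewrite !inE eqxx orbT; split => //; rewrite ?Hvw ?orbT // eq_sym.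
- by exists u; rewrite !inE eqxx; split => //; rewrite ?Huv ?orbT // eq_sym.
- by exists v; rewrite !inE eqxx orbT; split => //; rewrite ?Hvw ?orbT // eq_sym.
- by exists u; rewrite !inE eqxx; split => //; rewrite ?Huv ?orbT // eq_sym.
Qed.

Lemma key G G' (S' : {set T * T * T}) s t (F : {set T}) P1 P2 :
  simple G -> s != t ->
  (forall x y, adj G' x y -> adj G x y \/ (x = s /\ y = t) \/ (x = t /\ y = s)) ->
  packing G' S' ->
  isP3 G P1 -> isP3 G P2 -> [disjoint tverts P1 & tverts P2] ->
  [disjoint tverts P1 & gV G'] -> [disjoint tverts P2 & gV G'] ->
  [disjoint F & gV G'] -> [disjoint F & tverts P1] -> [disjoint F & tverts P2] ->
  (s \in gV G' -> t \in gV G' -> forall m, m \in gV G' -> m != s -> m != t ->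
     adj G m s \/ adj G m t ->
     exists t0', isP3 G t0' /\ tverts t0' \subset [set s; t; m] :|: F) ->
  #|S'| + 2 <= lam G.
Proof.
move=> Gs nst HE HS' HP1 HP2 d12 d1G d2G dFG dF1 dF2 Hrep.
have [H1 H2] := packingP _ _ HS'.
have Hsub t0 : t0 \in S' -> tverts t0 \subset gV G' by move/H1/P3_sub.
have HG t0 : t0 \in S' -> ~~ ((s \in tverts t0) && (t \in tverts t0)) -> isP3 G t0.
  move=> i0; move: (H1 _ i0); case: t0 {i0} => [[u v] w] /and5P [Huv Hvw n1 n2 n3]; rewrite /= n1 n2 n3.
  rewrite /= !inE !andbT => Hn.
  have tr x y : adj G' x y -> (x == u) || (x == v) || (x == w) ->
                 (y == u) || (y == v) || (y == w) -> adj G x y.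
    move=> /HE [//|[[-> ->]|[-> ->]]] hx hy; move: Hn; by rewrite ?hx ?hy.
  by rewrite (tr _ _ Huv) ?eqxx ?orbT // (tr _ _ Hvw) ?eqxx ?orbT.
have dG1 t1 : t1 \in S' -> [disjoint tverts P1 & tverts t1].
  by move=> i1; apply: disjointWr (Hsub _ i1) d1G.
have dG2 t1 : t1 \in S' -> [disjoint tverts P2 & tverts t1].
  by move=> i1; apply: disjointWr (Hsub _ i1) d2G.
case: (boolP [exists t0 in S', (s \in tverts t0) && (t \in tverts t0)]).
- case/exists_inP => t0 i0 /andP [st1 st2].
  have sub0 := Hsub _ i0.
  have [m [mt ms mt' Hm]] : exists m, [/\ m \in tverts t0, m != s, m != t &
     adj G m s \/ adj G m t].
    move: (H1 _ i0) st1 st2; case: (t0) => [[u v] w] HP st1 st2.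
    have [m [mt ms mt' Hm]] := third HP st1 st2 nst.
    exists m; split => //.
    have tr x y : adj G' x y -> x != s -> x != t -> adj G x y.
      by move=> /HE [//|[[-> _]|[-> _]]]; rewrite eqxx.
    have tr' x y : adj G' y x -> x != s -> x != t -> adj G x y.
      by move=> /HE [|[[_ ->]|[_ ->]]]; rewrite ?eqxx // adj_sym.
    case/or4P: Hm => h; [left|left|right|right];
      by [apply: tr h ms mt' | apply: tr' h ms mt'].
  have [t0' [Ht0' sub']] := Hrep (subsetP sub0 _ st1) (subsetP sub0 _ st2) _
     (subsetP sub0 _ mt) ms mt' Hm.
  have sub'' : tverts t0' \subset tverts t0 :|: F.
    apply: subset_trans sub' _; apply: setSU; apply/subsetP => x.
    by rewrite !inE -orbA => /or3P [] /eqP ->.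
  pose S0 := S' :\ t0.
  have pS0 : packing G S0.
    apply/packingP; split.
    + move=> t1; rewrite !inE => /andP [ne i1]; apply: HG => //.
      apply/negP => /andP [s1 _]; have := H2 _ _ i1 i0 ne.
      by rewrite -setI_eq0 => /eqP/setP/(_ s); rewrite !inE s1 st1.
    + by move=> t1 t2; rewrite !inE => /andP [_ i1] /andP [_ i2]; apply: H2.
  have [p2 c2] := add1 pS0 HP2 (fun t1 i1 => dG2 t1 (subsetP (subD1set S' t0) _ i1)).
  have d1 t1 : t1 \in P2 |: S0 -> [disjoint tverts P1 & tverts t1].
    case/setU1P => [->|i1] //.
    by apply: dG1; apply: (subsetP (subD1set S' t0)).
  have [p1 c1] := add1 p2 HP1 d1.
  have d0 t1 : t1 \in P1 |: (P2 |: S0) -> [disjoint tverts t0' & tverts t1].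
    move=> i1; apply: disjointWl sub'' _; rewrite disjsU.
    case/setU1P: i1 => [->|]; first by rewrite dF1 andbT; apply: disjointWl sub0 _; rewrite disjoint_sym.

    case/setU1P => [->|i1]; first by rewrite dF2 andbT; apply: disjointWl sub0 _; rewrite disjoint_sym.
    move: i1; rewrite !inE => /andP [ne i1].
    by rewrite (H2 _ _ i0 i1) 1?eq_sym // (disjointWr (Hsub _ i1) dFG).
  have [p0 c0] := add1 p1 Ht0' d0.
  apply: leq_trans (lam_ge p0); rewrite c0 c1 c2 (cardsD1 t0 S') i0.
  by rewrite addnC.
- rewrite negb_exists_in => /forall_inP Hn.
  have pS : packing G S'.
    by apply/packingP; split => // t0 i0; apply: HG => //; apply: Hn.
  have [p2 c2] := add1 pS HP2 dG2.
  have d1 t1 : t1 \in P2 |: S' -> [disjoint tverts P1 & tverts t1].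
    by case/setU1P => [->|i1] //; apply: dG1.
  have [p1 c1] := add1 p2 HP1 d1.
  by apply: leq_trans (lam_ge p1); rewrite c1 c2 addn2.
Qed.


Lemma card3 (p q y : T) : p != q -> p != y -> q != y -> #|[set p; q; y]| = 3.
Proof.
move=> pq py qy; rewrite [_ :|: [set y]]setUC cardsU1 cards2 !inE.
by rewrite ![y == _]eq_sym (negbTE pq) (negbTE py) (negbTE qy).
Qed.

Lemma card4 (p q r y : T) : p != q -> p != r -> q != r -> p != y -> q != y -> r != y ->
  #|[set p; q; r; y]| = 4.
Proof.
move=> pq pr qr py qy ry.
rewrite [_ :|: [set y]]setUC cardsU1 [_ :|: [set r]]setUC cardsU1 cards2 !inE.
rewrite ![y == _]eq_sym ![r == _]eq_sym.
rewrite (negbTE pq) (negbTE py) (negbTE qy) ?(negbTE pr) ?(negbTE qr) ?(negbTE ry) ?(negbTE (pr : p != r)).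
by rewrite eq_sym (negbTE ry).
Qed.

Lemma deg2_nb G v p q y : deg G v = 2 -> adj G v p -> adj G v q -> p != q ->
  adj G v y -> y = p \/ y = q.
Proof.
move=> d vp vq pq vy; case: (eqVneq y p) => [|yp]; first by left.
case: (eqVneq y q) => [|yq]; first by right.
have : #|[set p; q; y]| <= deg G v.
  apply: subset_leq_card; apply/subsetP => z; rewrite !inE -!orbA.
  by case/or3P => /eqP ->.
by rewrite card3 // ?d // eq_sym.
Qed.

Lemma deg3_nb G v p q r y : deg G v = 3 -> adj G v p -> adj G v q -> adj G v r ->
  p != q -> p != r -> q != r -> adj G v y -> [\/ y = p, y = q | y = r].
Proof.
move=> d vp vq vr pq pr qr vy; case: (eqVneq y p) => [|yp]; first by constructor 1.
case: (eqVneq y q) => [|yq]; first by constructor 2.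
case: (eqVneq y r) => [|yr]; first by constructor 3.
have : #|[set p; q; r; y]| <= deg G v.
  apply: subset_leq_card; apply/subsetP => z; rewrite !inE -!orbA.
  by case/or4P => /eqP ->.
by rewrite card4 // ?d // eq_sym.
Qed.

Lemma N_del G (R : {set T}) x : x \in gV G -> x \notin R ->
  [set y | adj (delv G R) x y] = [set y | adj G x y] :\: R.
Proof.
move=> xG xR; apply/setP => y; rewrite !inE /adj /= !inE xG xR /=.
by case: (y \in R); case: (y \in gV G).
Qed.

Lemma inG32_del G (R : {set T}) : inG32 G ->
  (forall x, x \in gV G -> x \notin R ->
     (forall y, y \in R -> ~~ adj G x y) \/
     (deg G x = 3 /\ exists p, forall y, y \in R -> adj G x y -> y = p)) ->
  inG32 (delv G R).
Proof.
case=> Gs Gd H; split; first exact: Gs.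
move=> x; rewrite /= inE => /andP [xR xG].
rewrite /deg N_del //.
have := cardsID R [set y | adj G x y]; rewrite -/(deg G x).
have := Gd _ xG; case: (H _ xG xR) => [Hn|[d3 [p Hp]]].
- have -> : [set y | adj G x y] :&: R = set0.
    apply/setP => y; rewrite !inE; apply/negP => /andP [xy yR].
    by move: (Hn _ yR); rewrite xy.
  by rewrite cards0 add0n => ? ->.
- have : #|[set y | adj G x y] :&: R| <= 1.
    rewrite -(cards1 p); apply: subset_leq_card; apply/subsetP => y.
    by rewrite !inE => /andP [xy yR]; rewrite (Hp _ yR xy).
  rewrite d3; move=> h1 _ h2; apply/andP; split.
  + by rewrite -(leq_add2l #|[set y | adj G x y] :&: R|) h2; apply: leq_trans (leq_add h1 (leqnn 2)) _.
  + by rewrite -h2 leq_addl.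
Qed.

Lemma inG32_deladd G (R : {set T}) u v : inG32 G -> u \in gV G -> v \in gV G ->
  u \notin R -> v \notin R -> u != v -> ~~ adj G u v ->
  (forall x, x \in gV G -> x \notin R -> x != u -> x != v ->
     forall y, y \in R -> ~~ adj G x y) ->
  (exists p, [/\ p \in R, adj G u p & forall y, y \in R -> adj G u y -> y = p]) ->
  (exists p, [/\ p \in R, adj G v p & forall y, y \in R -> adj G v y -> y = p]) ->
  inG32 (adde (delv G R) u v).
Proof.
case=> [[Gsym Girr] Gd] uG vG uR vR uv nuv Hn Hu Hv; split.
  split => [x y|x] /=; first by rewrite Gsym; case: (x == u); case: (y == v); case: (x == v); case: (y == u); rewrite /= ?orbT ?orbF ?andbF.

  rewrite Girr /=; case: (eqVneq x u) => [->|]; by rewrite ?(negbTE uv) // andbF.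
have Hsyma : forall x y, adj G x y = adj G y x.
  by move=> x y; apply: adj_sym.
move=> x; rewrite /= inE => /andP [xR xG].
have e1 : forall w, w \in gV G -> w \notin R -> w != u -> w != v -> 
  [set y | adj (adde (delv G R) u v) w y] = [set y | adj G w y].
  move=> w wG wR wu wv; apply/setP => y; rewrite !inE /adj /= !inE wG wR (negbTE wu) (negbTE wv) /=.
  rewrite !orbF; case yR : (y \in R); last by rewrite /= ?andbT.
  by rewrite /=; have := Hn _ wG wR wu wv _ yR; rewrite /adj wG /= => /negbTE ->.
have e2 : forall w w', w \in gV G -> w \notin R -> w' \in gV G -> w' \notin R ->
  w != w' -> ~~ adj G w w' ->
  (exists p, [/\ p \in R, adj G w p & forall y, y \in R -> adj G w y -> y = p]) ->
  (forall y, adj (adde (delv G R) u v) w y = (y == w') || adj (delv G R) w y) ->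
  deg (adde (delv G R) u v) w = deg G w.
  move=> w w' wG wR w'G w'R ww' nww' [p [pR wp Hp]] Hadj.
  rewrite /deg; have -> : [set y | adj (adde (delv G R) u v) w y] =
     w' |: ([set y | adj G w y] :\ p).
    apply/setP => y; rewrite !inE Hadj; case: (eqVneq y w') => //= yw'.
    rewrite /adj /= !inE wG wR /=; case yR : (y \in R) => /=.
      case: (eqVneq y p) => //= yp; apply/esym/negP => /andP [yG e].
      by have := Hp y yR; rewrite /adj wG yG e => /(_ isT) /eqP; rewrite (negbTE yp).
    by case: (eqVneq y p) => //= yp; rewrite yp pR in yR.
  rewrite cardsU1 !inE negb_and nww' orbT add1n.
  rewrite [#|[set y | adj G w y]|](cardsD1 p) !inE wp.
  done.
case: (eqVneq x u) => [->|xu].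
  rewrite (e2 u v) //; first exact: Gd.
  move=> y; rewrite /adj /= !inE eqxx (negbTE uv) uG uR /=.
  case: (eqVneq y v) => [->|]; by rewrite ?vR ?vG ?orbT ?andbT ?orbF.
case: (eqVneq x v) => [->|xv].
  rewrite (e2 v u) //; first exact: Gd.
  - by rewrite eq_sym.
  - by rewrite Hsyma.
  move=> y; rewrite /adj /= !inE eqxx vG vR /= (eq_sym v u) (negbTE uv) /=.
  case: (eqVneq y u) => [->|]; by rewrite ?uR ?uG ?orbT ?andbT ?orbF.
rewrite /deg (e1 x) //; exact: Gd.
Qed.


Lemma mkP3 G u v w : adj G u v -> adj G v w -> u != v -> v != w -> u != w ->
  isP3 G (u, v, w).
Proof. by move=> *; apply/and5P. Qed.

Lemma disj33 (x1 x2 x3 y1 y2 y3 : T) :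
  x1 != y1 -> x1 != y2 -> x1 != y3 -> x2 != y1 -> x2 != y2 -> x2 != y3 ->
  x3 != y1 -> x3 != y2 -> x3 != y3 ->
  [disjoint [set x1; x2; x3] & [set y1; y2; y3]].
Proof.
move=> *; rewrite -setI_eq0; apply/eqP/setP => z; rewrite !inE.
apply/negP => /andP []; rewrite -!orbA.
by case/or3P => /eqP -> /or3P [] /eqP E; subst;
  match goal with H : is_true (?a != ?a) |- _ => by rewrite eqxx in H end.
Qed.

End Aux.

Ltac neq_close :=
  solve [ match goal with
  | H : is_true (?a != ?a) |- _ => by rewrite eqxx in H
  | H : is_true (?a \in ?S), H' : is_true (?a \notin ?S) |- _ => by rewrite H in H'
  | H : deg ?G ?a = _, H' : deg ?G ?a = _ |- _ => by rewrite H in H'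
  | H : is_true (adj ?G ?a ?a), Gs : simple ?G |- _ => by rewrite adj_irr in H
  end ].
Ltac neq := apply/eqP; let E := fresh "E" in intro E; subst; neq_close.

Section Apack.
Variable T : finType.

Lemma in3 (x u v w : T) : x \in [set u; v; w] -> [\/ x = u, x = v | x = w].
Proof.
by rewrite !inE -!orbA => /or3P [] /eqP ->; [constructor 1|constructor 2|constructor 3].
Qed.

Lemma Apack (G : sgraph T) (VA : {set T}) a b : simple G ->
  (forall x, x \in gV G -> 1 < deg G x) -> deg G a = 3 -> adj G a b ->
  a \in VA -> b \notin VA -> #|VA| = 5 -> {subset VA <= gV G} ->
  (forall w y, w \in VA -> adj G w y -> y \in VA \/ (w = a /\ y = b)) ->
  exists P1 P2, [/\ isP3 G P1, isP3 G P2, [disjoint tverts P1 & tverts P2],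
     tverts P1 \subset b |: VA & tverts P2 \subset b |: VA].
Proof.
move=> Gs Gd da ab aA bA c5 subA NA.
have Hsy x y : adj G x y = adj G y x by apply: adj_sym.
have : #|[set y | adj G a y] :\ b| == 2.
  by move: da; rewrite /deg (cardsD1 b) inE ab add1n => [[->]].
case/cards2P => p [q [pq E]].
have inNa y : y \in [set y | adj G a y] :\ b = (y \in [set p; q]) by rewrite E.
have ap : adj G a p by move: (inNa p); rewrite !inE eqxx /= => /andP [_ ->].
have aq : adj G a q by move: (inNa q); rewrite !inE eqxx orbT /= => /andP [_ ->].
have pb : p != b by move: (inNa p); rewrite !inE eqxx /= => /andP [-> _].
have qb : q != b by move: (inNa q); rewrite !inE eqxx orbT /= => /andP [-> _].
have Na y : adj G a y -> [\/ y = b, y = p | y = q].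
  move=> ay; case: (eqVneq y b) => [->|yb]; first by constructor 1.
  move: (inNa y); rewrite !inE yb ay /= => /esym /orP [] /eqP ->;
    by [constructor 2|constructor 3].
have pA : p \in VA by case: (NA _ _ aA ap) => // [[_ E']]; rewrite E' eqxx in pb.
have qA : q \in VA by case: (NA _ _ aA aq) => // [[_ E']]; rewrite E' eqxx in qb.
have pa : p != a by apply/eqP => E'; rewrite E' adj_irr in ap.
have qa : q != a by apply/eqP => E'; rewrite E' adj_irr in aq.
have : #|VA :\: [set a; p; q]| == 2.
  have := cardsID [set a; p; q] VA.
  have -> : VA :&: [set a; p; q] = [set a; p; q].
    apply/setIidPr/subsetP => x; rewrite !inE -!orbA.
    by case/or3P => /eqP ->.
  rewrite card3; [|by rewrite eq_sym|by rewrite eq_sym|by []]; rewrite c5 => /eqP; by rewrite -[5]/(3 + 2) eqn_add2l.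
case/cards2P => r [s [rs E2]].
have inR z : z \in VA :\: [set a; p; q] = (z \in [set r; s]) by rewrite E2.
have rA : r \in VA by move: (inR r); rewrite !inE eqxx /= => /andP [_ ->].
have sA : s \in VA by move: (inR s); rewrite !inE eqxx orbT /= => /andP [_ ->].
have : (r != a) && (r != p) && (r != q).
  by move: (inR r); rewrite !inE eqxx /= negb_or negb_or => /andP [].
case/andP => /andP [ra rp] rq.
have : (s != a) && (s != p) && (s != q).
  by move: (inR s); rewrite !inE eqxx orbT /= negb_or negb_or => /andP [].
case/andP => /andP [sa sp] sq.
have inVA y : y \in VA -> y != a -> [\/ y = p, y = q | y \in [set r; s]].
  move=> yA ya; case: (eqVneq y p) => [->|yp]; first by constructor 1.
  case: (eqVneq y q) => [->|yq]; first by constructor 2.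
  by constructor 3; rewrite -inR !inE yA (negbTE ya) (negbTE yp) (negbTE yq).
have Nw w y : w \in VA -> w != a -> w != p -> w != q -> adj G w y ->
   [\/ y = p, y = q | y \in [set r; s] :\ w].
  move=> wA wa wp wq wy; case: (NA _ _ wA wy) => [yA|[E' _]]; last by rewrite E' eqxx in wa.
  have ya : y != a.
    apply/eqP => E'; rewrite E' Hsy in wy.
    case: (Na _ wy) => E''; [by rewrite E'' in wA; rewrite wA in bA|by rewrite E'' eqxx in wp|by rewrite E'' eqxx in wq].
  case: (inVA _ yA ya) => [->|->|yrs]; [by constructor 1|by constructor 2|constructor 3].
  by move: yrs; rewrite !inE => ->; rewrite andbT; apply/eqP => E'; rewrite E' adj_irr in wy.
have Nr y : adj G r y -> [\/ y = p, y = q | y = s].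
  move=> ry; case: (Nw _ _ rA ra rp rq ry) => [->|->|]; [by constructor 1|by constructor 2|].
  rewrite !inE => /andP [yr /orP [] /eqP E']; [by rewrite E' eqxx in yr|by constructor 3].
have Ns y : adj G s y -> [\/ y = p, y = q | y = r].
  move=> sy; case: (Nw _ _ sA sa sp sq sy) => [->|->|]; [by constructor 1|by constructor 2|].
  rewrite !inE => /andP [ys /orP [] /eqP E']; [by constructor 3|by rewrite E' eqxx in ys].
have bp : b != p by rewrite eq_sym.
have bq : b != q by rewrite eq_sym.
have br : b != r by neq.
have bs : b != s by neq.
have ba : b != a by neq.
have sub1 x : x \in VA -> x \in b |: VA by rewrite !inE => ->; rewrite orbT.
have subP (u v w : T) : u \in b |: VA -> v \in b |: VA -> w \in b |: VA ->
    tverts (u, v, w) \subset b |: VA.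
  by move=> hu hv hw; apply/subsetP => x /in3 [] ->.
have bbA : b \in b |: VA by rewrite !inE eqxx.
have nb w : w \in VA -> exists n1 n2, [/\ adj G w n1, adj G w n2 & n1 != n2].
  move=> wA; have := Gd w (subA w wA); rewrite /deg => /card_gt1P [n1 [n2 [h1 h2 h3]]].
  by exists n1, n2; move: h1 h2; rewrite !inE => h1 h2; split.
have [n1 [n2 [rn1 rn2 n12]]] := nb r rA.
case: (boolP (adj G r s)) => [rsa|nrs].
- have [n [rn ns]] : exists n, adj G r n /\ n != s.
    case: (eqVneq n1 s) => [e|ne]; last by exists n1.
    by exists n2; split => //; rewrite -e eq_sym.
  case: (Nr _ rn) => [e|e|e]; last by rewrite e eqxx in ns.
  + rewrite e in rn.
    exists (b, a, q), (s, r, p); split; try by apply: subP => //; apply: sub1.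
    * by apply: mkP3 => //; try (by rewrite Hsy); neq.
    * by apply: mkP3 => //; try (by rewrite Hsy); neq.
    * by apply: disj33; neq.
  + rewrite e in rn.
    exists (b, a, p), (s, r, q); split; try by apply: subP => //; apply: sub1.
    * by apply: mkP3 => //; try (by rewrite Hsy); neq.
    * by apply: mkP3 => //; try (by rewrite Hsy); neq.
    * by apply: disj33; neq.
- have rp' : adj G r p.
    have h m : adj G r m -> m = p \/ m = q.
      move=> rm; case: (Nr _ rm) => [->|->|e]; [by left|by right|].
      by rewrite -e rm in nrs.
    case: (h _ rn1) => e1; first by rewrite -e1.
    case: (h _ rn2) => e2; first by rewrite -e2.
    by rewrite e1 e2 eqxx in n12.
  have [m1 [m2 [sm1 sm2 m12]]] := nb s sA.
  have sp' : adj G s p.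
    have h m : adj G s m -> m = p \/ m = q.
      move=> sm; case: (Ns _ sm) => [->|->|e]; [by left|by right|].
      by rewrite e Hsy in sm; rewrite sm in nrs.
    case: (h _ sm1) => e1; first by rewrite -e1.
    case: (h _ sm2) => e2; first by rewrite -e2.
    by rewrite e1 e2 eqxx in m12.
  exists (b, a, q), (r, p, s); split; try by apply: subP => //; apply: sub1.
  * by apply: mkP3 => //; try (by rewrite Hsy); neq.
  * by apply: mkP3 => //; try (by rewrite Hsy); neq.
  * by apply: disj33; neq.
Qed.
End Apack.

Section Finish.
Variable T : finType.

Lemma lam_attained (G : sgraph T) : exists S, packing G S /\ #|S| = lam G.
Proof.
have h : 0 < #|[pred S : {set T * T * T} | packing G S]|.
  by apply/card_gt0P; exists set0; rewrite inE packing0.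
have [S HS E] := eq_bigmax_cond (fun S : {set T * T * T} => #|S|) h.
by exists S; split; [move: HS; rewrite inE|rewrite /lam -E].
Qed.

Lemma finish (G G' : sgraph T) (R F : {set T}) s t P1 P2 :
  simple G -> s != t ->
  (forall x y, adj G' x y -> adj G x y \/ (x = s /\ y = t) \/ (x = t /\ y = s)) ->
  isP3 G P1 -> isP3 G P2 -> [disjoint tverts P1 & tverts P2] ->
  tverts P1 \subset R -> tverts P2 \subset R -> F \subset R ->
  [disjoint F & tverts P1] -> [disjoint F & tverts P2] ->
  gV G' = gV G :\: R -> #|R| <= 8 ->
  (s \in gV G' -> t \in gV G' -> forall m, m \in gV G' -> m != s -> m != t ->
     adj G m s \/ adj G m t ->
     exists t0', isP3 G t0' /\ tverts t0' \subset [set s; t; m] :|: F) ->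
  nv G' <= 4 * lam G' -> nv G <= 4 * lam G.
Proof.
move=> Gs st HE HP1 HP2 d12 s1 s2 sF dF1 dF2 EV cR Hrep.
have [S [pS cS]] := lam_attained G'.
have dR (X : {set T}) : X \subset R -> [disjoint X & gV G'].
  move=> XR; rewrite EV -setI_eq0; apply/eqP/setP => x; rewrite !inE.
  by case xX: (x \in X); rewrite /= ?(subsetP XR _ xX).
have := key Gs st HE pS HP1 HP2 d12 (dR _ s1) (dR _ s2) (dR _ sF) dF1 dF2 Hrep.
rewrite cS /nv EV => hl hv.
have := cardsID R (gV G); have : #|gV G :&: R| <= 8.
  by apply: leq_trans cR; apply: subset_leq_card; apply: subsetIr.
move=> h8 <-; apply: leq_trans (leq_add h8 hv) _.
by apply: leq_trans (leq_mul (leqnn 4) hl); rewrite mulnDr addnC.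
Qed.

Lemma HE_del (G : sgraph T) (R : {set T}) s t x y :
  adj (delv G R) x y -> adj G x y \/ (x = s /\ y = t) \/ (x = t /\ y = s).
Proof. by rewrite /adj /= !inE => /and3P [/andP [_ ->] /andP [_ ->] ->]; left. Qed.

Lemma HE_add (G : sgraph T) (R : {set T}) u v x y :
  adj (adde (delv G R) u v) x y -> adj G x y \/ (x = u /\ y = v) \/ (x = v /\ y = u).
Proof.
rewrite /adj /= !inE => /and3P [/andP [_ ->] /andP [_ ->]] /or3P [->|/andP [/eqP -> /eqP ->]|/andP [/eqP -> /eqP ->]];
  by [left|right; left|right; right].
Qed.

End Finish.

Section Paths.
Variable T : finType.

Lemma shortP (G : sgraph T) x z b : simple G -> short_path G x z b ->
  [/\ [/\ x != z, x != b & z != b], adj G x z, adj G z b, deg G z = 2 /\ deg G x = 3 &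
     forall y, adj G z y -> y = x \/ y = b].
Proof.
move=> Gs /and5P [u xz zb /eqP dz /eqP dx].
move: u; rewrite /= !inE !negb_or !andbT => /andP [/andP [n1 n2] n3].
split => //; move=> y zy; apply: (deg2_nb dz) => //; by rewrite adj_sym.
Qed.

Lemma longP (G : sgraph T) x y z b : simple G -> long_path G x y z b ->
  [/\ [/\ x != y, x != z, x != b & y != z] /\ (y != b /\ z != b),
     [/\ adj G x y, adj G y z & adj G z b], [/\ deg G y = 2, deg G z = 2 & deg G x = 3],
     forall w, adj G z w -> w = y \/ w = b &
     forall w, adj G y w -> w = x \/ w = z].
Proof.
move=> Gs /and5P [u xy yz zb /and3P [/eqP dy /eqP dz /eqP dx]].
move: u; rewrite /= !inE !negb_or !andbT => /andP [/andP [n1 /andP [n2 n3]] /andP [/andP [n4 n5] n6]].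
split => //.
- by move=> w zw; apply: (deg2_nb dz) => //; rewrite adj_sym.
- by move=> w yw; apply: (deg2_nb dy) => //; rewrite adj_sym.
Qed.

End Paths.

Lemma cardU_le (T : finType) (A B : {set T}) : #|A :|: B| <= #|A| + #|B|.
Proof. by rewrite cardsU leq_subr. Qed.

Lemma card3_le (T : finType) (x y z : T) : #|[set x; y; z]| <= 3.
Proof.
apply: leq_trans (cardU_le _ _) _; rewrite cards1 addn1 ltnS.
by apply: leq_trans (cardU_le _ _) _; rewrite !cards1.
Qed.

Lemma card2_le (T : finType) (x y : T) : #|[set x; y]| <= 2.
Proof. by apply: leq_trans (cardU_le _ _) _; rewrite !cards1. Qed.

Lemma cardR_le (T : finType) (A X : {set T}) k : #|A| = 5 -> #|X| <= k -> k <= 3 ->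
  #|A :|: X| <= 8.
Proof.
move=> cA cX k3; apply: leq_trans (cardU_le _ _) _; rewrite cA.
by apply: leq_trans (leq_trans cX k3) _.
Qed.

Lemma subR (T : finType) (A X Y : {set T}) b : b \in X -> Y \subset b |: A ->
  Y \subset A :|: X.
Proof.
move=> bX /subsetP h; apply/subsetP => y /h; rewrite !inE => /orP [/eqP ->|->].
  by rewrite bX orbT.
by [].
Qed.

Lemma disjF (T : finType) (A Y : {set T}) b z1 z2 : Y \subset b |: A ->
  z1 \notin A -> z2 \notin A -> z1 != b -> z2 != b -> [disjoint [set z1; z2] & Y].
Proof.
move=> /subsetP h z1A z2A z1b z2b; rewrite -setI_eq0; apply/eqP/setP => y.
rewrite !inE; apply/negP => /andP [/orP [] /eqP -> /h]; rewrite !inE.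
  by rewrite (negbTE z1b) (negbTE z1A).
by rewrite (negbTE z2b) (negbTE z2A).
Qed.

Lemma sub3 (T : finType) (u v w s t m : T) (F : {set T}) :
  u \in [set s; t; m] :|: F -> v \in [set s; t; m] :|: F -> w \in [set s; t; m] :|: F ->
  tverts (u, v, w) \subset [set s; t; m] :|: F.
Proof. by move=> *; apply/subsetP => x /in3 [] ->. Qed.

Theorem lemma3p4 (T : finType) (G A B G' : sgraph T) (a b z1 z2 : T) :
  inG32 G ->
  adj G a b -> deg G a = 3 -> deg G b = 3 ->
  simple A -> simple B -> subgraph A G -> subgraph B G ->
  [disjoint gV A & gV B] ->
  gV G = gV A :|: gV B ->
  (forall x y, (adj G x y && ~~ ((x == a) && (y == b) || (x == b) && (y == a)))
               = adj A x y || adj B x y) ->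
  a \in gV A -> b \in gV B ->
  let Ag := SGraph (b |: gV A)
              (fun x y => [|| gE A x y, (x == a) && (y == b) | (x == b) && (y == a)]) in
  nv Ag = 6 -> lam Ag = 2 ->
  adj B b z1 -> adj B b z2 -> z1 != z2 ->
  ( (exists x1 x2, [/\ short_path G x1 z1 b, short_path G x2 z2 b, x1 != x2 &
        G' = delv G (gV A :|: [set b; z1; z2])]) \/
    (exists x1 x2, [/\ short_path G x1 z1 b, short_path G x2 z2 b, x1 = x2 &
        G' = adde (delv G (gV A :|: [set b])) z1 z2]) \/
    (exists x1 y1 x2, [/\ long_path G x1 y1 z1 b, short_path G x2 z2 b, x1 != x2 &
        G' = adde (delv G (gV A :|: [set b; z1; z2])) y1 x2]) \/
    (exists x1 y1 x2, [/\ long_path G x1 y1 z1 b, short_path G x2 z2 b, x1 = x2 &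
        G' = adde (delv G (gV A :|: [set b; z1])) y1 z2]) \/
    (exists x1 y1 x2 y2, [/\ long_path G x1 y1 z1 b, long_path G x2 y2 z2 b &
        G' = adde (delv G (gV A :|: [set b; z1; z2])) y1 y2]) ) ->
  inG32 G' /\ (nv G' <= 4 * lam G' -> nv G <= 4 * lam G).
Proof.
move=> HG ab da db sA sB [subAV subAE] [subBV subBE] dAB VG Hdec aA bB Ag nAg lAg bz1 bz2 z12 Hcase.
have Gs := HG.1.
have Gd1 x : x \in gV G -> 1 < deg G x by move=> xG; case/andP: (HG.2 x xG).
have Hsy x y : adj G x y = adj G y x by apply: adj_sym.
have bz1G : adj G b z1 := subBE _ _ bz1.
have bz2G : adj G b z2 := subBE _ _ bz2.
have z1A : z1 \notin gV A by rewrite (disjointFl dAB (adj_inr bz1)).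
have z2A : z2 \notin gV A by rewrite (disjointFl dAB (adj_inr bz2)).
have bA : b \notin gV A by rewrite (disjointFl dAB bB).
have NA w y : w \in gV A -> adj G w y -> y \in gV A \/ (w = a /\ y = b).
  move=> wA wy; have wb : w != b by neq.
  case E: ((w == a) && (y == b)); first by right; case/andP: E => /eqP -> /eqP ->.
  have := Hdec w y; rewrite wy E (negbTE wb) /= => /esym/orP [/adj_inr|/adj_inl].
    by left.
  by rewrite (disjointFr dAB wA).
have NAx x y : x \notin gV A -> x != b -> adj G x y -> y \notin gV A.
  move=> xA xb xy; apply/negP => yA; rewrite Hsy in xy.
  case: (NA _ _ yA xy) => [xA'|[_ xb']]; first by rewrite xA' in xA.
  by rewrite xb' eqxx in xb.
have cA5 : #|gV A| = 5.
  by move: nAg; rewrite /nv /= cardsU1 bA add1n => [[]].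
have [P1 [P2 [HP1 HP2 d12 s1 s2]]] :=
  Apack Gs Gd1 da ab aA bA cA5 (subsetP subAV) NA.
clear Ag nAg lAg Hdec.
have az1 : a != z1 by neq.
have az2 : a != z2 by neq.
have Nb y : adj G b y -> [\/ y = a, y = z1 | y = z2].
  by apply: deg3_nb => //; rewrite Hsy.
case: Hcase => [[x1 [x2 [sp1 sp2 x12 ->]]]|[[x1 [x2 [sp1 sp2 ex ->]]]|[[x1 [y1 [x2 [lp1 sp2 x12 ->]]]]|[[x1 [y1 [x2 [lp1 sp2 ex ->]]]]|[x1 [y1 [x2 [y2 [lp1 lp2 ->]]]]]]]]].
-
  have [[x1z1 x1b z1b] x1z1G z1bG [dz1 dx1] Nz1] := shortP Gs sp1.
  have [[x2z2 x2b z2b] x2z2G z2bG [dz2 dx2] Nz2] := shortP Gs sp2.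
  have x1A : x1 \notin gV A by apply: (NAx z1) => //; rewrite Hsy.
  have x2A : x2 \notin gV A by apply: (NAx z2) => //; rewrite Hsy.
  split.
  + apply: inG32_del => // x xG.
    rewrite !inE !negb_or => /and3P [xA /andP [xb xz1] xz2].
    have HR y : y \in gV A :|: [set b; z1; z2] -> adj G x y ->
        (y = z1 /\ x = x1) \/ (y = z2 /\ x = x2).
      rewrite !inE -!orbA => /or4P [yA|/eqP->|/eqP->|/eqP->] xy.
      * by rewrite (negbTE (NAx _ _ xA xb xy)) in yA.
      * by case: (Nb x); rewrite 1?Hsy // => E; subst; neq_close.
      * left; split => //; case: (Nz1 x); rewrite 1?Hsy // => E; subst; neq_close.
      * right; split => //; case: (Nz2 x); rewrite 1?Hsy // => E; subst; neq_close.
    case: (eqVneq x x1) => [ex|nx1]; [|case: (eqVneq x x2) => [ex|nx2]].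
    * right; split; first by rewrite ex.
      exists z1 => y yR xy; case: (HR y yR xy) => [[]|[_ e]] //.
      by subst; neq_close.
    * right; split; first by rewrite ex.
      exists z2 => y yR xy; case: (HR y yR xy) => [[_ e]|[]] //.
      by subst; neq_close.
    * left => y yR; apply/negP => xy; case: (HR y yR xy) => [[_ e]|[_ e]].
        by subst; neq_close.
      by subst; neq_close.
  + apply: (finish (R := gV A :|: [set b; z1; z2]) (F := set0) (s := b) (t := a)
       Gs _ (fun x y h => @HE_del T G (gV A :|: [set b; z1; z2]) b a x y h) HP1 HP2 d12).
    * by neq.
    * by apply: (subR _ s1); rewrite !inE eqxx.
    * by apply: (subR _ s2); rewrite !inE eqxx.
    * exact: sub0set.
    * by rewrite -setI_eq0 set0I.
    * by rewrite -setI_eq0 set0I.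
    * by [].
    * by apply: (cardR_le cA5 (card3_le _ _ _)).
    * by move=> /setDP [_]; rewrite !inE eqxx /= orbT.
-
  subst x2.
  have [[x1z1 x1b z1b] x1z1G z1bG [dz1 dx1] Nz1] := shortP Gs sp1.
  have [[x2z2 _ z2b] x2z2G z2bG [dz2 _] Nz2] := shortP Gs sp2.
  have z1G : z1 \in gV G := adj_inr bz1G.
  have z2G : z2 \in gV G := adj_inr bz2G.
  split.
  + apply: inG32_deladd => //.
    * by rewrite !inE negb_or z1A.
    * by rewrite !inE negb_or z2A.
    * by apply/negP => h; case: (Nz1 _ h) => E; subst; neq_close.
    * move=> x xG; rewrite !inE negb_or => /andP [xA xb] xz1 xz2 y.
      rewrite !inE => /orP [yA|/eqP ->]; apply/negP => xy.
        by rewrite (negbTE (NAx _ _ xA xb xy)) in yA.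
      by case: (Nb x); rewrite 1?Hsy // => E; subst; neq_close.
    * exists b; split; first by rewrite !inE eqxx orbT.
        by rewrite Hsy.
      move=> y; rewrite !inE => /orP [yA|/eqP -> //] h.
      by rewrite (negbTE (NAx _ _ z1A z1b h)) in yA.
    * exists b; split; first by rewrite !inE eqxx orbT.
        by rewrite Hsy.
      move=> y; rewrite !inE => /orP [yA|/eqP -> //] h.
      by rewrite (negbTE (NAx _ _ z2A z2b h)) in yA.
  + apply: (finish (R := gV A :|: [set b]) (F := set0) (s := z1) (t := z2)
       Gs z12 (fun x y h => @HE_add T G (gV A :|: [set b]) z1 z2 x y h) HP1 HP2 d12).
    * by apply: (subR _ s1); rewrite !inE eqxx.
    * by apply: (subR _ s2); rewrite !inE eqxx.
    * exact: sub0set.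
    * by rewrite -setI_eq0 set0I.
    * by rewrite -setI_eq0 set0I.
    * by [].
    * by apply: (cardR_le cA5 (leqW (leqW (eq_leq (cards1 b))))).
    * move=> _ _ m /setDP [mG]; rewrite !inE negb_or => /andP [mA mb] mz1 mz2 hm.
      have mx : m = x1.
        case: hm => h; [case: (Nz1 m); rewrite 1?Hsy //|case: (Nz2 m); rewrite 1?Hsy //];
          move=> E; subst; neq_close.
      subst m; exists (z1, x1, z2); split.
        by apply: mkP3 => //; try (by rewrite Hsy); neq.
      by apply: sub3; rewrite !inE eqxx ?orbT.
-
  have [[[n1 n2 n3 n4] [n5 n6]] [x1y1 y1z1 z1bG'] [dy1 dz1 dx1] Nz1 Ny1] := longP Gs lp1.
  have [[x2z2 x2b z2b] x2z2G z2bG [dz2 dx2] Nz2] := shortP Gs sp2.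
  have z1b := n6.
  have y1A : y1 \notin gV A by apply: (NAx z1) => //; rewrite Hsy.
  have x2A : x2 \notin gV A by apply: (NAx z2) => //; rewrite Hsy.
  have y1z2 : y1 != z2.
    apply/eqP => E; subst y1; case: (Nz2 z1) => // E; subst; neq_close.
  have y1G : y1 \in gV G := adj_inl y1z1.
  have x2G : x2 \in gV G := adj_inl x2z2G.
  split.
  + apply: inG32_deladd => //.
    * by rewrite !inE !negb_or y1A n5 n4 y1z2.
    * rewrite !inE !negb_or x2A x2b x2z2 /= andbT; neq.
    * neq.
    * by apply/negP => h; case: (Ny1 _ h) => E; subst; neq_close.
    * move=> x xG; rewrite !inE !negb_or => /and3P [xA /andP [xb xz1] xz2] xy1 xx2 y.
      rewrite !inE -!orbA => /or4P [yA|/eqP ->|/eqP ->|/eqP ->]; apply/negP => xy.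
      - by rewrite (negbTE (NAx _ _ xA xb xy)) in yA.
      - by case: (Nb x); rewrite 1?Hsy // => E; subst; neq_close.
      - by case: (Nz1 x); rewrite 1?Hsy // => E; subst; neq_close.
      - by case: (Nz2 x); rewrite 1?Hsy // => E; subst; neq_close.
    * exists z1; split => //; first by rewrite !inE eqxx !orbT.
      move=> y; rewrite !inE -!orbA => /or4P [yA|/eqP ->|/eqP -> //|/eqP ->] h.
      - by rewrite (negbTE (NAx _ _ y1A n5 h)) in yA.
      - by case: (Nb y1); rewrite 1?Hsy // => E; subst; neq_close.
      - by case: (Ny1 _ h) => E; subst; neq_close.
    * exists z2; split => //; first by rewrite !inE eqxx !orbT.
      move=> y; rewrite !inE -!orbA => /or4P [yA|/eqP ->|/eqP ->|/eqP -> //] h.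
      - by rewrite (negbTE (NAx _ _ x2A x2b h)) in yA.
      - by case: (Nb x2); rewrite 1?Hsy // => E; subst; neq_close.
      - by case: (Nz1 x2); rewrite 1?Hsy // => E; subst; neq_close.
  + apply: (finish (R := gV A :|: [set b; z1; z2]) (F := [set z1; z2]) (s := y1) (t := x2)
       Gs _ (fun x y h => @HE_add T G (gV A :|: [set b; z1; z2]) y1 x2 x y h) HP1 HP2 d12).
    * neq.
    * by apply: (subR _ s1); rewrite !inE eqxx.
    * by apply: (subR _ s2); rewrite !inE eqxx.
    * by apply/subsetP => w; rewrite !inE => /orP [] ->; rewrite ?orbT.
    * exact: (disjF s1).
    * exact: (disjF s2).
    * by [].
    * by apply: (cardR_le cA5 (card3_le _ _ _)).
    * move=> _ _ m /setDP [mG]; rewrite !inE !negb_or => /and3P [mA /andP [mb mz1] mz2] ms mt [] hm.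
      - exists (m, y1, z1); split.
          by apply: mkP3 => //; neq.
        by apply: sub3; rewrite !inE eqxx ?orbT.
      - exists (m, x2, z2); split.
          by apply: mkP3 => //; neq.
        by apply: sub3; rewrite !inE eqxx ?orbT.
-
  subst x2.
  have [[[n1 n2 n3 n4] [n5 n6]] [x1y1 y1z1 z1bG'] [dy1 dz1 dx1] Nz1 Ny1] := longP Gs lp1.
  have [[x2z2 x2b z2b] x2z2G z2bG [dz2 dx2] Nz2] := shortP Gs sp2.
  have z1b := n6.
  have y1A : y1 \notin gV A by apply: (NAx z1) => //; rewrite Hsy.
  have y1z2 : y1 != z2.
    apply/eqP => E; subst y1; case: (Nz2 z1) => // E; subst; neq_close.
  have y1G : y1 \in gV G := adj_inl y1z1.
  have z2G : z2 \in gV G := adj_inr bz2G.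
  split.
  + apply: inG32_deladd => //.
    * by rewrite !inE !negb_or y1A n5 n4.
    * by rewrite !inE !negb_or z2A z2b eq_sym z12.
    * by apply/negP => h; case: (Ny1 _ h) => E; subst; neq_close.
    * move=> x xG; rewrite !inE !negb_or => /andP [xA /andP [xb xz1]] xy1 xz2 y.
      rewrite !inE -?orbA => /or3P [yA|/eqP ->|/eqP ->]; apply/negP => xy.
      - by rewrite (negbTE (NAx _ _ xA xb xy)) in yA.
      - by case: (Nb x); rewrite 1?Hsy // => E; subst; neq_close.
      - by case: (Nz1 x); rewrite 1?Hsy // => E; subst; neq_close.
    * exists z1; split => //; first by rewrite !inE eqxx !orbT.
      move=> y; rewrite !inE -?orbA => /or3P [yA|/eqP ->|/eqP -> //] h.
      - by rewrite (negbTE (NAx _ _ y1A n5 h)) in yA.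
      - by case: (Nb y1); rewrite 1?Hsy // => E; subst; neq_close.
    * exists b; split => //; first by rewrite !inE eqxx !orbT.
      move=> y; rewrite !inE -?orbA => /or3P [yA|/eqP -> //|/eqP ->] h.
      - by rewrite (negbTE (NAx _ _ z2A z2b h)) in yA.
      - by case: (Nz2 z1) => // E; subst; neq_close.
  + apply: (finish (R := gV A :|: [set b; z1]) (F := set0) (s := y1) (t := z2)
       Gs y1z2 (fun x y h => @HE_add T G (gV A :|: [set b; z1]) y1 z2 x y h) HP1 HP2 d12).
    * by apply: (subR _ s1); rewrite !inE eqxx.
    * by apply: (subR _ s2); rewrite !inE eqxx.
    * exact: sub0set.
    * by rewrite -setI_eq0 set0I.
    * by rewrite -setI_eq0 set0I.
    * by [].
    * by apply: (cardR_le cA5 (card2_le _ _)).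
    * move=> _ _ m /setDP [mG]; rewrite !inE !negb_or => /andP [mA /andP [mb mz1]] ms mt hm.
      have mx : m = x1.
        case: hm => h; [case: (Ny1 m); rewrite 1?Hsy //|case: (Nz2 m); rewrite 1?Hsy //];
          move=> E; subst; neq_close.
      subst m; exists (y1, x1, z2); split.
        by apply: mkP3 => //; try (by rewrite Hsy); neq.
      by apply: sub3; rewrite !inE eqxx ?orbT.
-
  have [[[n1 n2 n3 n4] [n5 n6]] [x1y1 y1z1 z1bG'] [dy1 dz1 dx1] Nz1 Ny1] := longP Gs lp1.
  have [[[m1 m2 m3 m4] [m5 m6]] [x2y2 y2z2 z2bG'] [dy2 dz2 dx2] Nz2 Ny2] := longP Gs lp2.
  have y1A : y1 \notin gV A by apply: (NAx z1) => //; rewrite Hsy.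
  have y2A : y2 \notin gV A by apply: (NAx z2) => //; rewrite Hsy.
  have y1z2 : y1 != z2.
    apply/eqP => E; subst y1; case: (Nz2 z1) => // E; subst z1; last neq_close.
    by case: (Nz2 x1); rewrite 1?Hsy // => E; subst; neq_close.
  have y2z1 : y2 != z1.
    apply/eqP => E; subst y2; case: (Nz1 z2) => // E; subst z2; last neq_close.
    by case: (Nz1 x2); rewrite 1?Hsy // => E; subst; neq_close.
  have y1y2 : y1 != y2.
    by apply/eqP => E; subst y2; case: (Ny1 z2) => // E; subst; neq_close.
  have y1G : y1 \in gV G := adj_inl y1z1.
  have y2G : y2 \in gV G := adj_inl y2z2.
  split.
  + apply: inG32_deladd => //.
    * by rewrite !inE !negb_or y1A n5 n4 y1z2.
    * by rewrite !inE !negb_or y2A m5 m4 y2z1.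
    * by apply/negP => h; case: (Ny1 _ h) => E; subst; neq_close.
    * move=> x xG; rewrite !inE !negb_or => /and3P [xA /andP [xb xz1] xz2] xy1 xy2 y.
      rewrite !inE -!orbA => /or4P [yA|/eqP ->|/eqP ->|/eqP ->]; apply/negP => xy.
      - by rewrite (negbTE (NAx _ _ xA xb xy)) in yA.
      - by case: (Nb x); rewrite 1?Hsy // => E; subst; neq_close.
      - by case: (Nz1 x); rewrite 1?Hsy // => E; subst; neq_close.
      - by case: (Nz2 x); rewrite 1?Hsy // => E; subst; neq_close.
    * exists z1; split => //; first by rewrite !inE eqxx !orbT.
      move=> y; rewrite !inE -!orbA => /or4P [yA|/eqP ->|/eqP -> //|/eqP ->] h.
      - by rewrite (negbTE (NAx _ _ y1A n5 h)) in yA.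
      - by case: (Nb y1); rewrite 1?Hsy // => E; subst; neq_close.
      - by case: (Ny1 _ h) => E; subst; neq_close.
    * exists z2; split => //; first by rewrite !inE eqxx !orbT.
      move=> y; rewrite !inE -!orbA => /or4P [yA|/eqP ->|/eqP ->|/eqP -> //] h.
      - by rewrite (negbTE (NAx _ _ y2A m5 h)) in yA.
      - by case: (Nb y2); rewrite 1?Hsy // => E; subst; neq_close.
      - by case: (Ny2 _ h) => E; subst; neq_close.
  + apply: (finish (R := gV A :|: [set b; z1; z2]) (F := [set z1; z2]) (s := y1) (t := y2)
       Gs y1y2 (fun x y h => @HE_add T G (gV A :|: [set b; z1; z2]) y1 y2 x y h) HP1 HP2 d12).
    * by apply: (subR _ s1); rewrite !inE eqxx.
    * by apply: (subR _ s2); rewrite !inE eqxx.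
    * by apply/subsetP => w; rewrite !inE => /orP [] ->; rewrite ?orbT.
    * exact: (disjF s1).
    * exact: (disjF s2).
    * by [].
    * by apply: (cardR_le cA5 (card3_le _ _ _)).
    * move=> _ _ m /setDP [mG]; rewrite !inE !negb_or => /and3P [mA /andP [mb mz1] mz2] ms mt [] hm.
      - exists (m, y1, z1); split.
          by apply: mkP3 => //; neq.
        by apply: sub3; rewrite !inE eqxx ?orbT.
      - exists (m, y2, z2); split.
          by apply: mkP3 => //; neq.
        by apply: sub3; rewrite !inE eqxx ?orbT.
Qed.
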